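(* Let $\mathcal{A}$ be a nontrivial abelian group. Let $M_{11}(p_1,p_2)$ be the graph consisting of the $5$-cycle $v_1v_2v_3v_4v_5v_1$ and the triangle $v_1v_6v_7$ (sharing the vertex $v_1$), together with $p_1\ge0$ pendant vertices adjacent to $v_1$ and $p_2\ge 0$ pendant vertices adjacent to $v_2$. Then $M_{11}(p_1,p_2)$ is $\mathcal{A}$-vertex magic if and only if $p_1=p_2=0$. Further, $M_{11}(0,0)$ is group vertex magic.
   Context: A map $\ell:V(G)\to\mathcal{A}\setminus\{0\}$ is an $\mathcal{A}$-vertex magic labeling if there is $\mu\in\mathcal{A}$ with $\sum_{u\in N(v)}\ell(u)=\mu$ for every vertex $v$; $G$ is $\mathcal{A}$-vertex magic if such a labeling exists, and group vertex magic if it is $\mathcal{A}$-vertex magic for every nontrivial abelian group $\mathcal{A}$. A pendant vertex has degree $1$. *)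

(* Defs.v *)
From HB Require Import structures.
From mathcomp Require Import all_boot all_order all_algebra.
Set Implicit Arguments. Unset Strict Implicit. Unset Printing Implicit Defensive.
Import GRing.Theory.
Local Open Scope ring_scope.

Definition vertex_magic (A : zmodType) (T : finType) (e : rel T) : Prop :=
  exists l : T -> A, (forall v, l v != 0) /\
    exists mu : A, forall v, \sum_(u | e v u) l u = mu.

Definition nontrivial_group (A : zmodType) : Prop := exists a : A, a != 0.

Definition group_vertex_magic (T : finType) (e : rel T) : Prop :=
  forall A : zmodType, nontrivial_group A -> vertex_magic A e.

Local Close Scope ring_scope.

(* M_11(p1,p2) on vertex set {0,...,6+p1+p2}:
   0..6 = v1..v7; 7..6+p1 pendants at v1 (=0); 7+p1..6+p1+p2 pendants at v2 (=1).
   Oriented edge list (before symmetrisation). *)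
Definition M11_edge (p1 p2 : nat) (a b : nat) : bool :=
  [|| (a == 0) && (b == 1)%N, (a == 1) && (b == 2)%N, (a == 2) && (b == 3)%N,
      (a == 3) && (b == 4)%N, (a == 4) && (b == 0)%N,
      (a == 0) && (b == 5)%N, (a == 5) && (b == 6)%N, (a == 6) && (b == 0)%N,
      (a == 0) && (7 <= b < 7 + p1)%N
    | (a == 1) && (7 + p1 <= b < 7 + p1 + p2)%N].

Definition M11 (p1 p2 : nat) : rel 'I_(7 + p1 + p2) :=
  fun x y => M11_edge p1 p2 x y || M11_edge p1 p2 y x.

Arguments M11 : clear implicits.
Arguments M11_edge : clear implicits.

(* Main.v *)
Require Import Defs.
From mathcomp Require Import all_boot all_order all_algebra zify.
Import GRing.Theory.

Lemma nbp1 p1 p2 n : 0 < p1 -> (M11_edge p1 p2 7 n || M11_edge p1 p2 n 7) = (n == 0).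
Proof. move=> hp. rewrite /M11_edge; case: n => [|[|[|[|[|[|[|n]]]]]]] //=. all: lia. Qed.
Lemma nbp2 p1 p2 n : 0 < p2 -> (M11_edge p1 p2 (7+p1) n || M11_edge p1 p2 n (7+p1)) = (n == 1).
Proof. move=> hp. rewrite /M11_edge; case: n => [|[|[|[|[|[|[|n]]]]]]] //=. all: lia. Qed.
Lemma nb5 p1 p2 n : (M11_edge p1 p2 5 n || M11_edge p1 p2 n 5) = (n == 0)%N || (n == 6)%N.
Proof. by rewrite /M11_edge; do 8 (case: n => [|n] //=). Qed.
Lemma nb2 p1 p2 n : (M11_edge p1 p2 2 n || M11_edge p1 p2 n 2) = (n == 1)%N || (n == 3)%N.
Proof. by rewrite /M11_edge; do 8 (case: n => [|n] //=). Qed.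
Local Open Scope ring_scope.

Lemma magic00 (A:zmodType) (a:A) : a != 0 -> vertex_magic A (M11 0 0).
Proof.
move=> a0; exists (fun v : 'I_7 => if val v \in [:: 0;1;4]%N then a else -a); split.
  by move=> v; case: ifP => _; rewrite ?oppr_eq0.
exists 0 => v. rewrite big_mkcond /= !big_ord_recl big_ord0 /=.
case: v => [[|[|[|[|[|[|[|?]]]]]]] Hv] //=.
all: rewrite /M11 /M11_edge /=.
all: by rewrite ?(add0r, addr0) ?addrA ?addrK ?subrr ?addNr.
Qed.

Lemma sum1 (A:zmodType) n (P : pred 'I_n) (F : 'I_n -> A) a :
  (forall u, P u = (u == a)) -> \sum_(u | P u) F u = F a.
Proof. by move=> H; rewrite (eq_bigl (pred1 a)) ?big_pred1_eq. Qed.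

Lemma sum2 (A:zmodType) n (P : pred 'I_n) (F : 'I_n -> A) a b : a != b ->
  (forall u, P u = (u == a) || (u == b)) -> \sum_(u | P u) F u = F a + F b.
Proof.
move=> ab H; rewrite (bigD1 a) /= ?H ?eqxx //; congr (_ + _); apply: sum1 => u.
rewrite H; case: (eqVneq u a) => [->|] /=; last by rewrite andbT.
by rewrite ?eqxx ?andbF (negbTE ab).
Qed.

Theorem proposition4p13 :
  (forall (A : zmodType), nontrivial_group A ->
     forall p1 p2 : nat, vertex_magic A (M11 p1 p2) <-> (p1 = 0%N /\ p2 = 0%N))
  /\ group_vertex_magic (M11 0 0).
Proof.
split; last by move=> A [a a0]; exact: magic00 a0.
move=> A [a a0] p1 p2; split; last by case=> -> ->; exact: magic00 a0.
case=> l [l0 [mu Hmu]].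
have h0 : (0 < 7 + p1 + p2)%N by lia.
have h1 : (1 < 7 + p1 + p2)%N by lia.
have h2 : (2 < 7 + p1 + p2)%N by lia.
have h3 : (3 < 7 + p1 + p2)%N by lia.
have h5 : (5 < 7 + p1 + p2)%N by lia.
have h6 : (6 < 7 + p1 + p2)%N by lia.
have e5 : l (Ordinal h0) + l (Ordinal h6) = mu.
  rewrite -(Hmu (Ordinal h5)); symmetry; apply: sum2 => // u.
  by rewrite /M11 /= nb5.
have e2 : l (Ordinal h1) + l (Ordinal h3) = mu.
  rewrite -(Hmu (Ordinal h2)); symmetry; apply: sum2 => // u.
  by rewrite /M11 /= nb2.
have P1 : p1 = 0%N.
  apply/eqP; rewrite -leqn0 leqNgt; apply/negP => hp.
  have h7 : (7 < 7 + p1 + p2)%N by lia.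
  have e7 : l (Ordinal h0) = mu.
    rewrite -(Hmu (Ordinal h7)); symmetry; apply: sum1 => u.
    exact: (nbp1 p1 p2 (val u) hp).
  move: e5; rewrite -e7 -{2}(addr0 (l _)) => /addrI h.
  by move: (l0 (Ordinal h6)); rewrite h eqxx.
split => //.
apply/eqP; rewrite -leqn0 leqNgt; apply/negP => hp.
have h7 : (7 + p1 < 7 + p1 + p2)%N by lia.
have e7 : l (Ordinal h1) = mu.
  rewrite -(Hmu (Ordinal h7)); symmetry; apply: sum1 => u.
  exact: (nbp2 p1 p2 (val u) hp).
move: e2; rewrite -e7 -{2}(addr0 (l _)) => /addrI h.
by move: (l0 (Ordinal h3)); rewrite h eqxx.
Qed.
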